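(* For a regular Hausdorff space $X$ the following are equivalent: (1) $X$ has a $\sigma$-locally countable base; (2) $\mathcal{K}(X)$ has a $\sigma$-locally countable weak base; (3) $\mathcal{K}(X)$ has a $\sigma$-locally countable base.
   Context: $\mathcal{K}(X)$ is the set of nonempty compact subsets of $X$ with the Vietoris topology (base: $\langle U_1,\dots,U_k\rangle=\{K: K\subset\bigcup_i U_i,\ K\cap U_j\neq\emptyset\ \forall j\}$, $U_i$ open in $X$). A weak base for $Y$ is a cover $\mathcal{P}=\bigcup_{y\in Y}\mathcal{P}_y$ such that: for $U,V\in\mathcal{P}_y$ there is $W\in\mathcal{P}_y$ with $W\subset U\cap V$; each member of $\mathcal{P}_y$ contains $y$, and for each open $U\ni y$ some $P\in\mathcal{P}_y$ has $P\subset U$; and $G\subset Y$ is open whenever for each $y\in G$ some $P\in\mathcal{P}_y$ has $P\subset G$. A family is locally countable if each point has a neighborhood meeting only countably many members; $\sigma$-locally countable means a countable union of locally countable families. *)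

(* Defs.v *)
From HB Require Import structures.
From mathcomp Require Import all_boot all_order all_algebra.
From mathcomp Require Import all_classical all_reals all_analysis.
Set Implicit Arguments. Unset Strict Implicit. Unset Printing Implicit Defensive.
Local Open Scope classical_set_scope.

Section GenericTop.
Variables (T : Type) (op : set T -> Prop).

Definition locally_countable (F : set (set T)) : Prop :=
  forall x : T, exists U : set T, op U /\ U x /\
    countable [set P | F P /\ P `&` U !=set0].

Definition sigma_locally_countable (F : set (set T)) : Prop :=
  exists G : nat -> set (set T),
    (forall n, locally_countable (G n)) /\ F = \bigcup_n G n.

Definition is_base (B : set (set T)) : Prop :=
  (forall U, B U -> op U) /\
  (forall (U : set T) (x : T), op U -> U x ->
     exists V, B V /\ V x /\ V `<=` U).

Definition is_weak_base (P : T -> set (set T)) : Prop :=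
  (forall y U V, P y U -> P y V -> exists W, P y W /\ W `<=` U `&` V) /\
  (forall y W, P y W -> W y) /\
  (forall (U : set T) y, op U -> U y -> exists W, P y W /\ W `<=` U) /\
  (forall G : set T, (forall y, G y -> exists W, P y W /\ W `<=` G) -> op G).

Definition weak_base_family (P : T -> set (set T)) : set (set T) :=
  [set W | exists y, P y W].

Definition has_sigma_lc_base : Prop :=
  exists B, is_base B /\ sigma_locally_countable B.

Definition has_sigma_lc_weak_base : Prop :=
  exists P, is_weak_base P /\ sigma_locally_countable (weak_base_family P).

End GenericTop.

Definition hyperspace (X : topologicalType) : Type :=
  {K : set X | K !=set0 /\ compact K}.

Definition vietoris_basic (X : topologicalType) (s : seq (set X))
  : set (hyperspace X) :=
  [set K | (proj1_sig K `<=` \bigcup_(U in [set U | U \in s]) U) /\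
           (forall U, U \in s -> proj1_sig K `&` U !=set0)].

Definition vietoris_open (X : topologicalType) (A : set (hyperspace X)) : Prop :=
  forall K, A K -> exists s : seq (set X),
    (forall U, U \in s -> open U) /\ vietoris_basic s K /\ vietoris_basic s `<=` A.

(* Main.v *)
Require Import Defs.
From mathcomp Require Import all_boot all_order all_algebra.
From mathcomp Require Import all_classical all_reals all_analysis.
Set Implicit Arguments. Unset Strict Implicit. Unset Printing Implicit Defensive.
Local Open Scope classical_set_scope.

Definition ev (p : nat -> Prop) := exists N, forall k, (N <= k)%N -> p k.

Lemma wb_sep T (op : set T -> Prop) P y (S : set T) : is_weak_base op P -> ~ S y ->
  (forall U, op U -> U y -> U `&` S !=set0) ->
  (forall x, x <> y -> ~ S x -> exists U, op U /\ U x /\ U `&` S = set0) ->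
  forall W, P y W -> W `&` S !=set0.
Proof.
move=> [_ [_ [h3 h4]]] nSy hcl hsep W PW.
apply: contrapT => nWS.
have WS : forall x, W x -> ~ S x by move=> x Wx Sx; apply: nWS; exists x.
have oG : op (~` S).
  apply: h4 => x nSx; case: (pselect (x = y)) => [->|xy].
    by exists W; split => // z Wz; exact: WS.
  have [U [oU [Ux US]]] := hsep x xy nSx.
  have [W' [PW' W'U]] := h3 U x oU Ux.
  exists W'; split => // z /W'U Uz Sz.
  have : (U `&` S) z by [].
  by rewrite US.
by have [z [nSz Sz]] := hcl _ oG nSy.
Qed.

Lemma wb_seq T (op : set T -> Prop) P y (R : nat -> T) : is_weak_base op P ->
  (forall U, op U -> U y -> ev (fun k => U (R k))) ->
  (forall (I : set nat) x, x <> y -> (forall k, I k -> x <> R k) ->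
     exists U, op U /\ U x /\ (forall k, I k -> ~ U (R k))) ->
  forall W, P y W -> ev (fun k => W (R k)).
Proof.
move=> wb hconv hsep W PW; apply: contrapT => nev.
pose I := [set k | ~ W (R k)].
have Wy : W y by exact: wb.2.1 _ _ PW.
have nSy : ~ (R @` I) y by move=> [k Ik Rky]; apply: Ik; rewrite Rky.
have hcl : forall U, op U -> U y -> U `&` (R @` I) !=set0.
  move=> U oU Uy; have [N hN] := hconv U oU Uy.
  have [k [Nk nW]] : exists k, (N <= k)%N /\ ~ W (R k).
    apply: contrapT => hn; apply: nev; exists N => k Nk.
    apply: contrapT => nW; apply: hn; by exists k.
  exists (R k); split; [exact: hN | by exists k].
have hs : forall x, x <> y -> ~ (R @` I) x ->
    exists U, op U /\ U x /\ U `&` (R @` I) = set0.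
  move=> x xy nSx.
  have [U [oU [Ux hU]]] : exists U, op U /\ U x /\ (forall k, I k -> ~ U (R k)).
    apply: (hsep I x xy) => k Ik xR; apply: nSx; by exists k.
  exists U; split => //; split => //.
  apply/seteqP; split => z // [Uz [k Ik Rkz]]; apply: (hU k Ik); by rewrite Rkz.
have [z [Wz [k Ik Rkz]]] := @wb_sep T op P y (R @` I) wb nSy hcl hs W PW.
by apply: Ik; rewrite Rkz.
Qed.

Lemma wb_countable T (op : set T -> Prop) P y : is_weak_base op P ->
  sigma_locally_countable op (weak_base_family P) -> countable (P y).
Proof.
move=> wb [G [lcG FE]].
have [U hU] := choice (fun n => lcG n y).
have sub : P y `<=` \bigcup_(n in setT) [set Q | G n Q /\ Q `&` U n !=set0].
  move=> W PW.
  have : weak_base_family P W by exists y.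
  rewrite FE => -[n _ GnW]; exists n => //; split => //.
  exists y; split; [exact: wb.2.1 _ _ PW | exact: (hU n).2.1].
apply: (sub_countable (subset_card_le sub)); apply: bigcup_countable => // n _.
exact: (hU n).2.2.
Qed.

Definition dwb_seq A (P : set A -> Prop)
  (h1 : forall U V, P U -> P V -> exists W, P W /\ W `<=` U `&` V)
  (e : nat -> set A) (he : forall n, P (e n)) : nat -> {W | P W} :=
  fix q n := match n with
  | 0 => exist _ (e 0) (he 0)
  | n'.+1 => let h := cid (h1 _ _ (proj2_sig (q n')) (he n'.+1)) in
             exist _ (proj1_sig h) (proj1 (proj2_sig h)) end.

Lemma wb_dec T (op : set T -> Prop) P y : is_weak_base op P -> op setT ->
  countable (P y) ->
  exists Q : nat -> set T, (forall n, P y (Q n)) /\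
   (forall U, op U -> U y -> exists n, forall m, (n <= m)%N -> Q m `<=` U).
Proof.
move=> wb oT /countable_injP [f finj].
have [W0 [PW0 _]] := wb.2.2.1 setT y oT I.
pose e n := match pselect (exists W, P y W /\ f W = n) with
  | left h => proj1_sig (cid h) | right _ => W0 end.
have he : forall n, P y (e n).
  move=> n; rewrite /e; case: pselect => // h; exact: (proj2_sig (cid h)).1.
have heW : forall W, P y W -> e (f W) = W.
  move=> W PW; rewrite /e; case: pselect => [h|]; last by case; exists W.
  case: (cid h) => W' [PW' fW'] /=; apply: finj => //; exact: mem_set.
have h1 : forall U V, P y U -> P y V -> exists W, P y W /\ W `<=` U `&` V.
  by move=> U V PU PV; exact: wb.1.
pose q := dwb_seq h1 he.
have qS : forall n, proj1_sig (q n.+1) `<=` proj1_sig (q n) `&` e n.+1.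
  by move=> n /=; case: (cid _) => W [PW WS].
have qe : forall n, proj1_sig (q n) `<=` e n.
  by case=> [//|n] x /qS [].
have qdec : forall n m, (n <= m)%N -> proj1_sig (q m) `<=` proj1_sig (q n).
  move=> n m /subnK <-; elim: (m - n)%N => [//|k IH].
  by rewrite addSn => x /qS [] /IH.
exists (fun n => proj1_sig (q n)); split; first by move=> n; exact: proj2_sig.
move=> U oU Uy; have [W [PW WU]] := wb.2.2.1 U y oU Uy.
exists (f W) => m hm x /(qdec _ _ hm) /qe; rewrite heW // => /WU //.
Qed.

Lemma hs_inj (X : topologicalType) (K1 K2 : hyperspace X) :
  proj1_sig K1 = proj1_sig K2 -> K1 = K2.
Proof.
case: K1 K2 => [A pA] [B pB] /= AB; subst B; congr exist; exact: Prop_irrelevance.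
Qed.

Lemma vb_open (X : topologicalType) (s : seq (set X)) :
  (forall U, U \in s -> open U) -> vietoris_open (vietoris_basic s).
Proof. by move=> hs K Ks; exists s; split => //; split. Qed.

Lemma vo_setT (X : topologicalType) : vietoris_open (@setT (hyperspace X)).
Proof.
move=> K _; exists [:: setT]; split; first by move=> U; rewrite inE => /eqP ->; exact: openT.
split => //; split.
  by move=> x Kx; exists setT => //=; rewrite inE.
move=> U; rewrite inE => /eqP ->; case: (proj2_sig K) => -[x Kx] _; by exists x.
Qed.

Lemma open_pt (X : topologicalType) (S : set X) :
  (forall x, S x -> exists Ow, open Ow /\ Ow x /\ Ow `<=` S) -> open S.
Proof.
move=> h; rewrite openE => x Sx; have [Ow [oOw [Owx OwS]]] := h x Sx.
by rewrite /interior nbhsE; exists Ow.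
Qed.

Lemma nbhs_open (X : topologicalType) (x : X) (N : set X) :
  nbhs x N -> exists Ow, open Ow /\ Ow x /\ Ow `<=` N.
Proof. by rewrite nbhsE => -[Ow [oOw Owx] OwN]; exists Ow. Qed.

Lemma fold_open (X : topologicalType) (s : seq (set X)) :
  (forall U, U \in s -> open U) ->
  open (foldr setI setT s) /\
  (forall p, foldr setI setT s p <-> forall U, U \in s -> U p).
Proof.
elim: s => [|V s IH] hs /=; first by split; [exact: openT | by move=> p; split].
have [oF hF] : open (foldr setI setT s) /\
  (forall p, foldr setI setT s p <-> forall U, U \in s -> U p).
  by apply: IH => U Us; apply: hs; rewrite inE Us orbT.
split; first by apply: openI => //; apply: hs; rewrite inE eqxx.
move=> p; split.
  by move=> [Vp /hF Fp] U; rewrite inE => /orP [/eqP ->|/Fp].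
move=> h; split; first by apply: h; rewrite inE eqxx.
by apply/hF => U Us; apply: h; rewrite inE Us orbT.
Qed.

Definition sing (X : topologicalType) (x : X) : hyperspace X :=
  exist _ [set x] (conj (ex_intro (fun y => [set x] y) x erefl) (@compact_set1 X x)).

Lemma sing_open (X : topologicalType) (A : set (hyperspace X)) :
  vietoris_open A -> open (@sing X @^-1` A).
Proof.
move=> oA; apply: open_pt => x Ax.
have [s [os [[sub meet] sA]]] := oA _ Ax.
have [oF hF] := fold_open os.
exists (foldr setI setT s); split => //; split.
  apply/hF => U Us; have [y [/= -> Uy]] := meet U Us; exact: Uy.
move=> p /hF Fp; apply: sA; split.
  have [U Us Ux] := sub x erefl; move=> q /= ->; exists U => //; exact: Fp.
by move=> U Us; exists p; split => //; exact: Fp.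
Qed.

Lemma hsep (X : topologicalType) : hausdorff_space X -> forall x y : X, x <> y ->
  exists U V, open U /\ open V /\ U x /\ V y /\ (forall z, U z -> V z -> False).
Proof.
move=> hX x y xy; move: hX; rewrite open_hausdorff => /(_ x y) [].
  by apply/eqP.
case=> U V /=; rewrite !inE => -[xU yV] [oU oV UV].
exists U, V; split => //; split => //; split => //; split => // z Uz Vz.
have : (U `&` V) z by [].
by rewrite UV.
Qed.

Lemma closed1 (X : topologicalType) : hausdorff_space X -> forall x : X, closed [set x].
Proof. by move=> hX x; apply: accessible_closed_set1; exact: hausdorff_accessible. Qed.

Definition cupS (X : Type) (s : seq (set X)) := \bigcup_(U in [set U | U \in s]) U.

Lemma vo_setI (X : topologicalType) (A B : set (hyperspace X)) :
  vietoris_open A -> vietoris_open B -> vietoris_open (A `&` B).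
Proof.
move=> oA oB K [AK BK].
have [s [os [[Ks Kms] sA]]] := oA _ AK.
have [t [ot [[Kt Kmt] tB]]] := oB _ BK.
have ocs : open (cupS s) by apply: bigcup_open => U /= /os.
have oct : open (cupS t) by apply: bigcup_open => U /= /ot.
pose r := [seq V `&` cupS t | V <- s] ++ [seq W `&` cupS s | W <- t].
have rP : forall U, U \in r -> (exists2 V, V \in s & U = V `&` cupS t) \/
                               (exists2 W, W \in t & U = W `&` cupS s).
  by move=> U; rewrite mem_cat => /orP [/mapP [V Vs ->]|/mapP [W Wt ->]];
    [left | right]; [exists V | exists W].
exists r; split.
  move=> U /rP [[V Vs ->]|[W Wt ->]]; apply: openI => //; [exact: os | exact: ot].
split.
  split.
    move=> x Kx; have [V Vs Vx] := Ks x Kx.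
    exists (V `&` cupS t); last by split => //; exact: Kt.
    by rewrite /= mem_cat; apply/orP; left; apply/mapP; exists V.
  move=> U /rP [[V Vs ->]|[W Wt ->]].
    have [z [Kz Vz]] := Kms V Vs; exists z; split => //; split => //; exact: Kt.
  have [z [Kz Wz]] := Kmt W Wt; exists z; split => //; split => //; exact: Ks.
move=> L [Lr Lm]; split.
  apply: sA; split.
    move=> x /Lr [U /rP [[V Vs ->]|[W Wt ->]]] [H1 H2]; [by exists V | exact: H2].
  move=> V Vs; have [z [Lz [Vz _]]] : proj1_sig L `&` (V `&` cupS t) !=set0.
    by apply: Lm; rewrite mem_cat; apply/orP; left; apply/mapP; exists V.
  by exists z.
apply: tB; split.
  move=> x /Lr [U /rP [[V Vs ->]|[W Wt ->]]] [H1 H2]; [exact: H2 | by exists W].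
move=> W Wt; have [z [Lz [Wz _]]] : proj1_sig L `&` (W `&` cupS s) !=set0.
  by apply: Lm; rewrite mem_cat; apply/orP; right; apply/mapP; exists W.
by exists z.
Qed.

Definition NS (X : topologicalType) :=
  [set K : hyperspace X | ~ exists x, proj1_sig K = [set x]].

Lemma ns_open (X : topologicalType) : hausdorff_space X -> vietoris_open (@NS X).
Proof.
move=> hX K nsK; case: (proj2_sig K) => -[p Kp] _.
have [q [Kq qp]] : exists q, proj1_sig K q /\ q <> p.
  apply: contrapT => hn; apply: nsK; exists p; apply/seteqP; split => z //=.
    by move=> Kz; apply: contrapT => zp; apply: hn; exists z.
  by move=> ->.
have [U [V [oU [oV [Uq [Vp UV]]]]]] := hsep hX qp.
exists [:: setT; U; V]; split.
  by move=> W; rewrite !inE => /orP [/eqP ->|/orP [/eqP ->|/eqP ->]] //; exact: openT.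
split.
  split; first by move=> x Kx; exists setT => //=; rewrite inE eqxx.
  move=> W; rewrite !inE => /orP [/eqP ->|/orP [/eqP ->|/eqP ->]].
  - by exists p.
  - by exists q.
  - by exists p.
move=> L [_ Lm] [x Lx].
have [u [Lu Uu]] : proj1_sig L `&` U !=set0 by apply: Lm; rewrite !inE eqxx orbT.
have [v [Lv Vv]] : proj1_sig L `&` V !=set0 by apply: Lm; rewrite !inE eqxx !orbT.
move: Lu Lv; rewrite Lx /= => eu ev; subst u v; exact: UV Uu Vv.
Qed.

Lemma ev_and (p q : nat -> Prop) : ev p -> ev q -> ev (fun k => p k /\ q k).
Proof.
move=> [N1 h1] [N2 h2]; exists (maxn N1 N2) => k; rewrite geq_max => /andP [k1 k2].
by split; [exact: h1 | exact: h2].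
Qed.

Lemma ev_T : ev (fun _ => True). Proof. by exists 0. Qed.

Lemma ev_impl (p q : nat -> Prop) : ev p -> (forall k, p k -> q k) -> ev q.
Proof. by move=> [N h] pq; exists N => k /h /pq. Qed.

Lemma ev_seqall (A : eqType) (s : seq A) (p : A -> nat -> Prop) :
  (forall x, x \in s -> ev (p x)) -> ev (fun k => forall x, x \in s -> p x k).
Proof.
elim: s => [|y s IH] h; first by exists 0 => k _ x; rewrite in_nil.
have hs : forall x, x \in s -> ev (p x) by move=> x xs; apply: h; rewrite inE xs orbT.
have := ev_and (h y (mem_head y s)) (IH hs).
move=> H; apply: (ev_impl H) => k [py ps] x; rewrite inE => /orP [/eqP ->|] //; exact: ps.
Qed.

Lemma ev_nat n (p : nat -> nat -> Prop) :
  (forall i, (i < n)%N -> ev (p i)) -> ev (fun k => forall i, (i < n)%N -> p i k).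
Proof.
move=> h; have := @ev_seqall _ (iota 0 n) p.
case.
  by move=> x; rewrite mem_iota add0n => /andP [_ /h].
move=> N hN; exists N => k Nk i iN; apply: hN => //; by rewrite mem_iota add0n.
Qed.

Lemma bound_nat n (f : nat -> nat) : exists M, forall i, (i < n)%N -> (f i <= M)%N.
Proof.
elim: n => [|n [M hM]]; first by exists 0.
exists (maxn M (f n)) => i; rewrite ltnS leq_eqVlt => /orP [/eqP ->|/hM fM].
  exact: leq_maxr.
by apply: leq_trans fM (leq_maxl _ _).
Qed.

Definition sconv (X : topologicalType) (a : nat -> X) (x : X) :=
  forall U, open U -> U x -> ev (fun k => U (a k)).

Lemma compact_seq (X : topologicalType) (b : nat -> X) z :
  sconv b z -> compact ([set z] `|` range b).
Proof.
move=> cb F PF FA.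
case: (pselect (cluster F z)) => [cz|ncz]; first by exists z; split => //; left.
have [B [N [FB [nN BN]]]] : exists B N, F B /\ nbhs z N /\ ~ (B `&` N !=set0).
  apply: contrapT => hn; apply: ncz => B N FB nN; apply: contrapT => h.
  by apply: hn; exists B, N.
have [U [oU [Uz UN]]] := nbhs_open nN.
have [N0 hN0] := cb U oU Uz.
have FFin : F [set b k | k in `I_N0].
  apply: filterS (filterI FB FA) => x [Bx [xz|[k _ bkx]]].
    by exfalso; apply: BN; exists x; split => //; rewrite xz; exact: nbhs_singleton.
  case: (ltnP k N0) => kN; first by exists k.
  by exfalso; apply: BN; exists x; split => //; apply: UN; rewrite -bkx; exact: hN0.
have [x [[k _ bkx] clx]] := finite_compact (finite_image b (finite_II N0)) PF FFin.
by exists x; split => //; right; exists k.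
Qed.

Lemma hs_conv (X : topologicalType) (D : set X) (b : X) (a : nat -> X)
  (C : hyperspace X) (R : nat -> hyperspace X) :
  sconv a b -> proj1_sig C = D `|` [set b] ->
  (forall k, proj1_sig (R k) = D `|` [set a k]) ->
  forall U, vietoris_open U -> U C -> ev (fun k => U (R k)).
Proof.
move=> ca eC eR U oU UC.
have [s [os [[Cs Cm] sU]]] := oU C UC.
rewrite eC in Cs Cm.
have [V Vs Vb] := Cs b (or_intror erefl).
have e1 := ca V (os V Vs) Vb.
have e2 : ev (fun k => forall W, W \in s -> W b -> W (a k)).
  apply: ev_seqall => W Ws; case: (pselect (W b)) => Wb.
    by apply: (ev_impl (ca _ (os _ Ws) Wb)) => k h _.
  by exists 0 => k _ /Wb.
move: (ev_and e1 e2) => H; apply: (ev_impl H) => k [Vak hW]; apply: sU; split.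
  move=> x; rewrite eR => -[Dx|->]; [by apply: Cs; left | by exists V].
move=> W Ws; have [w [[Dw|/= ->] Ww]] := Cm W Ws.
  by exists w; rewrite eR; split => //; left.
by exists (a k); rewrite eR; split; [right | exact: hW].
Qed.

Lemma hs_sep (X : topologicalType) (hX : hausdorff_space X) (D : set X) (b : X)
  (a : nat -> X) (C : hyperspace X) (R : nat -> hyperspace X) :
  closed D -> (D b \/ D = set0) -> sconv a b ->
  proj1_sig C = D `|` [set b] -> (forall k, proj1_sig (R k) = D `|` [set a k]) ->
  forall (I : set nat) (K : hyperspace X), K <> C -> (forall k, I k -> K <> R k) ->
  exists U, vietoris_open U /\ U K /\ (forall k, I k -> ~ U (R k)).
Proof.
move=> cD hD ca eC eR I K KC KR.
have Kne : exists x, proj1_sig K x := (proj2_sig K).1.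
have hK : forall p, proj1_sig K = D `|` [set p] ->
    (p = b -> False) /\ (forall k, I k -> p = a k -> False).
  move=> p eK; split => [pb|k Ik pa].
    by apply: KC; apply: hs_inj; rewrite eK eC pb.
  by apply: (KR k Ik); apply: hs_inj; rewrite eK eR pa.
case: (pselect (exists p, D p /\ ~ proj1_sig K p)) => [[p [Dp nKp]]|hDK].
  exists (vietoris_basic [:: ~` [set p]]); split.
    apply: vb_open => W; rewrite inE => /eqP ->; rewrite openC; exact: closed1.
  split.
    split.
      move=> x Kx; exists (~` [set p]); first by rewrite /= inE.
      by move=> /= xp; apply: nKp; rewrite -xp.
    move=> W; rewrite inE => /eqP ->; have [x Kx] := Kne; exists x; split => //.
    by move=> /= xp; apply: nKp; rewrite -xp.
  move=> k Ik [sub _]; have := sub p; rewrite eR => /(_ (or_introl Dp)) [W].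
  by rewrite /= inE => /eqP -> /=; apply.
have DK : D `<=` proj1_sig K.
  by move=> x Dx; apply: contrapT => nKx; apply: hDK; exists x.
case: (pselect (exists p, proj1_sig K p /\ ~ D p)) => [[p [Kp nDp]]|hKD]; last first.
  exfalso.
  have KD : proj1_sig K = D.
    apply/seteqP; split => x Kx; last exact: DK.
    by apply: contrapT => nDx; apply: hKD; exists x.
  case: hD => [Db|D0].
    apply: KC; apply: hs_inj; rewrite KD eC; apply/seteqP; split => x.
      by left.
    by case=> // ->.
  by have [x] := Kne; rewrite KD D0.
case: (pselect (exists q, proj1_sig K q /\ ~ D q /\ q <> p)) => [[q [Kq [nDq qp]]]|hq].
  have [U [V [oU [oV [Uq [Vp UV]]]]]] := hsep hX qp.
  exists (vietoris_basic [:: setT; U `&` ~` D; V `&` ~` D]); split.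
    apply: vb_open => W; rewrite !inE => /orP [/eqP ->|/orP [/eqP ->|/eqP ->]];
      [exact: openT | |]; apply: openI => //; exact: closed_openC.
  split.
    split; first by move=> x Kx; exists setT => //=; rewrite inE eqxx.
    move=> W; rewrite !inE => /orP [/eqP ->|/orP [/eqP ->|/eqP ->]];
      [by exists p | by exists q | by exists p].
  move=> k Ik [_ Rm].
  have [u [Ru [Uu nDu]]] : proj1_sig (R k) `&` (U `&` ~` D) !=set0.
    by apply: Rm; rewrite !inE eqxx orbT.
  have [v [Rv [Vv nDv]]] : proj1_sig (R k) `&` (V `&` ~` D) !=set0.
    by apply: Rm; rewrite !inE eqxx !orbT.
  move: Ru Rv; rewrite eR => -[//|/= eu] [//|/= ev']; subst u v; exact: UV Uu Vv.
have eK : proj1_sig K = D `|` [set p].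
  apply/seteqP; split => x.
    move=> Kx; case: (pselect (D x)) => Dx; [by left | right].
    by apply: contrapT => xp; apply: hq; exists x.
  by case=> [/DK|/= ->].
have [pb pa] := hK p eK.
have [U [V [oU [oV [Up [Vb UV]]]]]] := hsep hX pb.
have [N hN] := ca V oV Vb.
pose F := [set a k | k in [set k | (k < N)%N /\ I k]].
have cF : closed F.
  apply: (@accessible_finite_set_closed X).1; first exact: hausdorff_accessible.
  apply: finite_image; apply: (sub_finite_set _ (finite_II N)).
  by move=> k [].
pose U' := U `&` ~` D `&` ~` F.
exists (vietoris_basic [:: setT; U']); split.
  apply: vb_open => W; rewrite !inE => /orP [/eqP ->|/eqP ->]; first exact: openT.
  by apply: openI; [apply: openI => //|]; exact: closed_openC.
split.
  split; first by move=> x Kx; exists setT => //=; rewrite inE eqxx.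
  move=> W; rewrite !inE => /orP [/eqP ->|/eqP ->]; exists p; split => //.
  split; [by split|].
  by move=> [k [kN Ik] akp]; exact: (pa k Ik (esym akp)).
move=> k Ik [_ Rm].
have [u [Ru [[Uu nDu] nFu]]] : proj1_sig (R k) `&` U' !=set0.
  by apply: Rm; rewrite !inE eqxx orbT.
move: Ru; rewrite eR => -[//|/= eu]; subst u.
case: (ltnP k N) => kN; first by apply: nFu; exists k.
exact: UV Uu (hN k kN).
Qed.

Lemma hs_wbseq (X : topologicalType) (hX : hausdorff_space X)
  (P : hyperspace X -> set (set (hyperspace X))) (D : set X) (b : X)
  (a : nat -> X) (C : hyperspace X) (R : nat -> hyperspace X) :
  is_weak_base (@vietoris_open X) P ->
  closed D -> (D b \/ D = set0) -> sconv a b ->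
  proj1_sig C = D `|` [set b] -> (forall k, proj1_sig (R k) = D `|` [set a k]) ->
  forall W, P C W -> ev (fun k => W (R k)).
Proof.
move=> wb cD hD ca eC eR; apply: (wb_seq wb).
  exact: hs_conv ca eC eR.
by move=> I x xC xR; have := @hs_sep X hX D b a C R cD hD ca eC eR I x xC xR.
Qed.

Definition sc (X : topologicalType) (A : set X) :=
  [set x | exists a : nat -> X, (forall n, A (a n)) /\ sconv a x].

Lemma seq_closed (X : topologicalType) (hX : hausdorff_space X)
  (P : hyperspace X -> set (set (hyperspace X)))
  (wb : is_weak_base (@vietoris_open X) P) (cnt : forall C, countable (P C))
  (S : set X) :
  (forall a x, (forall n, S (a n)) -> sconv a x -> S x) -> closed S.
Proof.
move=> hS; rewrite -openC.
pose G := @NS X `|` [set K : hyperspace X | exists x, proj1_sig K = [set x] /\ ~ S x].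
have oG : vietoris_open G.
  apply: wb.2.2.2 => K [nsK|[x [eK nSx]]].
    have [W [PW WN]] := wb.2.2.1 _ K (ns_open hX) nsK.
    by exists W; split => // L /WN; left.
  have [Q [PQ hQ]] := wb_dec wb (@vo_setT X) (cnt K).
  have [n hn] : exists n, forall L s, Q n L -> proj1_sig L = [set s] -> ~ S s.
    apply: contrapT => hn.
    have hs : forall n, exists s, (exists L, Q n L /\ proj1_sig L = [set s]) /\ S s.
      move=> n; apply: contrapT => h; apply: hn; exists n => L s QL eL Ss.
      by apply: h; exists s; split => //; exists L.
    have [s hs'] := choice hs.
    apply: nSx; apply: (hS s) => [n|]; first exact: (hs' n).2.
    move=> U oU Ux.
    have oB : vietoris_open (vietoris_basic [:: U]).
      by apply: vb_open => W; rewrite inE => /eqP ->.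
    have KB : vietoris_basic [:: U] K.
      split; first by move=> y; rewrite eK => /= ->; exists U => //=; rewrite inE.
      by move=> W; rewrite inE => /eqP ->; exists x; rewrite eK.
    have [m hm] := hQ _ oB KB.
    exists m => k mk; have [[L [QL eL]] _] := hs' k.
    have [sub _] := hm k mk L QL.
    have := sub (s k); rewrite eL => /(_ erefl) [U0].
    by rewrite /= inE => /eqP ->.
  exists (Q n); split => // L QL.
  case: (pselect (exists s, proj1_sig L = [set s])) => [[s eL]|nL].
    by right; exists s; split => //; exact: hn L s QL eL.
  by left.
have -> : ~` S = @sing X @^-1` G.
  apply/seteqP; split => x.
    by move=> nSx; right; exists x.
  move=> [/= ns|[y [/= exy nSy]]]; first by exfalso; apply: ns; exists x.
  have : [set x] x by [].
  by rewrite exy => /= ->.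
exact: sing_open.
Qed.

Lemma wnbhs (X : topologicalType) (hX : hausdorff_space X) (hR : regular_space X)
  (P : hyperspace X -> set (set (hyperspace X)))
  (wb : is_weak_base (@vietoris_open X) P) (cnt : forall C, countable (P C))
  (y : X) W : P (sing y) W -> nbhs y (@sing X @^-1` W).
Proof.
move=> PW; apply: contrapT => nV.
pose A := ~` (@sing X @^-1` W).
have clA : closure A y.
  move=> B nB; apply: contrapT => h; apply: nV; apply: filterS nB => x Bx.
  by apply: contrapT => nVx; apply: h; exists x.
have nscy : ~ sc A y.
  move=> [a [Aa ca]].
  have := @hs_wbseq X hX P set0 y a (sing y) (fun k => sing (a k)) wb closed0
    (or_intror erefl) ca _ _ W PW.
  case; [by rewrite /= set0U | by move=> k; rewrite /= set0U |].
  move=> N hN; exact: Aa N (hN N (leqnn N)).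
have : exists z b, (forall j, sc A (b j)) /\ sconv b z /\ ~ sc A z.
  apply: contrapT => hn; apply: nscy.
  have csc : closed (sc A).
    apply: (seq_closed hX wb cnt) => b z hb cb.
    by apply: contrapT => nz; apply: hn; exists z, b.
  have : closure A `<=` closure (sc A).
    by apply: closureS => x Ax; exists (fun _ => x); split => // U _ Ux; exists 0.
  move/(_ y clA).
  by rewrite -(closure_id _).1.
case=> z [b [hb [cb nz]]].
have [a ha] := choice hb.
pose Cs := [set z] `|` range b.
have cCs : compact Cs := compact_seq cb.
have clCs : closed Cs := compact_closed hX cCs.
pose C : hyperspace X := exist _ Cs (conj (ex_intro _ z (or_introl erefl)) cCs).
have cR : forall j k, Cs `|` [set a j k] !=set0 /\ compact (Cs `|` [set a j k]).
  move=> j k; split; first by exists z; left; left.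
  by apply: compactU => //; exact: compact_set1.
pose R j k : hyperspace X := exist _ _ (cR j k).
have Cb : forall j, Cs (b j) by move=> j; right; exists j.
have evR : forall j W', P C W' -> ev (fun k => W' (R j k)).
  move=> j W' PW'.
  apply: (@hs_wbseq X hX P Cs (b j) (a j) C (R j) wb clCs (or_introl (Cb j))
    (ha j).2 _ _ W' PW') => //.
  by apply/seteqP; split => x; [left | case=> // /= ->].
have [Q [PQ hQ]] := wb_dec wb (@vo_setT X) (cnt C).
have bz : forall i, b i <> z by move=> i bi; apply: nz; rewrite -bi.
have hM : forall i, exists M, nbhs (b i) M /\ closure M `<=` ~` [set z].
  move=> i; have nb : nbhs (b i) (~` [set z]).
    apply: open_nbhs_nbhs; split; [rewrite openC; exact: closed1 | exact: bz].
  by have [M nM clM] := hR (b i) _ nb; exists M.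
have [M hM'] := choice hM.
pose Vo i := (M i)°.
have oVo : forall i, open (Vo i) by move=> i; exact: open_interior.
have Vob : forall i, Vo i (b i) by move=> i; exact: (hM' i).1.
have clVo : forall i, ~ closure (Vo i) z.
  move=> i h; have := (hM' i).2 z (closureS (@interior_subset _ _) h).
  by apply.
have hJ : forall i, ev (fun j => ~ closure (Vo i) (b j)).
  move=> i; apply: (cb (~` closure (Vo i))); [rewrite openC; exact: closed_closure | exact: clVo i].
have [J hJ'] := choice hJ.
have hk : forall j, exists k, Q j (R j k) /\
    (forall i, (i < j)%N -> (J i <= j)%N -> ~ closure (Vo i) (a j k)).
  move=> j.
  have e1 := evR j (Q j) (PQ j).
  have e2 : ev (fun k => forall i, (i < j)%N -> (J i <= j)%N -> ~ closure (Vo i) (a j k)).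
    apply: ev_nat => i ij; case: (boolP (J i <= j)%N) => Jij.
      have := (ha j).2 (~` closure (Vo i)) _ (hJ' i j Jij).
      case; first by rewrite openC; exact: closed_closure.
      by move=> N hN; exists N => k Nk _; exact: hN.
    by exists 0.
  have [N hN] := ev_and e1 e2; exists N; exact: hN N (leqnn N).
have [k hk'] := choice hk.
pose d j := a j (k j).
apply: nz; exists d; split; first by move=> j; exact: (ha j).1.
move=> U oU Uz.
have [I0 hI0] := cb U oU Uz.
pose Ow := U `|` \bigcup_(i in `I_I0) Vo i.
have oOw : open Ow by apply: openU => //; apply: bigcup_open => i _; exact: oVo.
have COw : vietoris_basic [:: Ow] C.
  split.
    move=> x Cx; exists Ow; first by rewrite /= inE.
    case: Cx => [/= ->|[i _ <-]]; first by left.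
    case: (ltnP i I0) => iI; [by right; exists i => //; exact: Vob | left; exact: hI0].
  by move=> W'; rewrite inE => /eqP ->; exists z; split; left.
have oB : vietoris_open (vietoris_basic [:: Ow]).
  by apply: vb_open => W'; rewrite inE => /eqP ->.
have [m hm] := hQ _ oB COw.
have [M0 hM0] := bound_nat I0 J.
exists (maxn m (maxn I0 M0)) => j; rewrite !geq_max => /andP [mj /andP [I0j M0j]].
have [sub _] := hm j mj _ (hk' j).1.
have := sub (d j) (or_intror erefl).
case=> W'; rewrite /= inE => /eqP -> [//|[i iI Vi]].
exfalso; apply: ((hk' j).2 i _ _ (subset_closure Vi)).
  exact: leq_trans iI I0j.
exact: leq_trans (hM0 i iI) M0j.
Qed.

Lemma two_one (X : topologicalType) (hX : hausdorff_space X) (hR : regular_space X) :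
  has_sigma_lc_weak_base (@vietoris_open X) -> has_sigma_lc_base (@open X).
Proof.
case=> P [wb slc]; have cnt : forall C, countable (P C).
  by move=> C; exact: wb_countable wb slc.
case: slc => G [lcG FE].
pose Bn n := [set (@sing X @^-1` W)° | W in G n].
exists (\bigcup_(n in setT) Bn n); split.
  split.
    by move=> V [n _ [W _ <-]]; exact: open_interior.
  move=> U x oU Ux.
  have oU' : vietoris_open (vietoris_basic [:: U]).
    by apply: vb_open => W'; rewrite inE => /eqP ->.
  have Ix : vietoris_basic [:: U] (sing x).
    split; first by move=> y /= ->; exists U => //=; rewrite inE.
    by move=> W'; rewrite inE => /eqP ->; exists x; split.
  have [W [PW WU]] := wb.2.2.1 _ _ oU' Ix.
  have : weak_base_family P W by exists (sing x).
  rewrite FE => -[n _ GW].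
  exists ((@sing X @^-1` W)°); split; first by exists n => //; exists W.
  split; first exact: (wnbhs hX hR wb cnt PW).
  move=> p /interior_subset /WU [sub _]; have [U0] := sub p erefl.
  by rewrite /= inE => /eqP ->.
exists Bn; split => // n x.
have [UU [oUU [UUx cUU]]] := lcG n (sing x).
exists (@sing X @^-1` UU); split; first exact: sing_open.
split => //.
pose S := [set W | G n W /\ W `&` UU !=set0].
apply: (sub_countable (card_le_trans _ (card_image_le (fun W => (@sing X @^-1` W)°) S)) cUU).
apply: subset_card_le => V [[W GW <-] [p [Vp Up]]].
exists W => //; split => //; exists (sing p); split => //.
exact: (interior_subset Vp).
Qed.

Lemma fin_cover (X : topologicalType) (K : set X) (f : X -> set X) :
  compact K -> (forall x, K x -> nbhs x (f x)) ->
  exists s : seq X, (forall x, x \in s -> K x) /\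
    K `<=` [set y | exists2 x, x \in s & f x y].
Proof.
move=> /compact_near_coveringP cK hf.
pose F := filter_from [set: seq X] (fun s0 => [set s : seq X | {subset s0 <= s}]).
have FF : Filter F.
  apply: filter_from_filter; first by exists [::].
  move=> s0 s1 _ _; exists (s0 ++ s1) => //.
  by move=> s h; split => y ys; apply: h; rewrite mem_cat ys ?orbT.
have := cK (seq X) F (fun s y => exists2 x, x \in s & K x /\ f x y) FF.
case.
  move=> x Kx.
  exists (f x, [set s : seq X | {subset [:: x] <= s}]).
    split; first exact: hf.
    by exists [:: x].
  move=> [x' s] /= [fx' hs]; exists x; [apply: hs; exact: mem_head | by split].
move=> s0 _ hs0; exists [seq x <- s0 | `[< K x >]]; split.
  by move=> x; rewrite mem_filter => /andP [/asboolP].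
move=> y Ky; have [x xs [Kx fxy]] := hs0 s0 (fun y h => h) y Ky.
by exists x => //; rewrite mem_filter xs andbT; apply/asboolP.
Qed.

Lemma bound_seq (A : eqType) (s : seq A) (f : A -> nat) :
  exists M, forall x, x \in s -> (f x <= M)%N.
Proof.
elim: s => [|y s [M hM]]; first by exists 0.
exists (maxn M (f y)) => x; rewrite inE => /orP [/eqP ->|/hM fM].
  exact: leq_maxr.
by apply: leq_trans fM (leq_maxl _ _).
Qed.

Lemma three_two (X : topologicalType) :
  has_sigma_lc_base (@vietoris_open X) -> has_sigma_lc_weak_base (@vietoris_open X).
Proof.
case=> B [[oB bB] [G [lcG FE]]].
exists (fun K => [set W | B W /\ W K]); split.
  split.
    move=> K U V [BU UK] [BV VK].
    have [W [BW [WK WUV]]] := bB (U `&` V) K (vo_setI (oB U BU) (oB V BV)) (conj UK VK).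
    by exists W.
  split; first by move=> K W [].
  split.
    by move=> U K oU UK; have [W [BW [WK WU]]] := bB U K oU UK; exists W.
  move=> Gs hG K GK; have [W [[BW WK] WG]] := hG K GK.
  have [s [os [Ks sW]]] := oB W BW K WK.
  by exists s; split => //; split => //; exact: subset_trans sW WG.
exists (fun n => [set W | G n W /\ W !=set0]); split.
  move=> n K; have [U [oU [UK cU]]] := lcG n K; exists U; split => //; split => //.
  by apply: sub_countable cU; apply: subset_card_le => W [[GW _] WU].
apply/seteqP; split.
  move=> W [K [BW WK]]; have : B W by [].
  by rewrite FE => -[n _ GW]; exists n => //; split => //; exists K.
move=> W [n _ [GW [K WK]]]; exists K; split => //; rewrite FE; by exists n.
Qed.

Lemma one_three (X : topologicalType) :
  has_sigma_lc_base (@open X) -> has_sigma_lc_base (@vietoris_open X).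
Proof.
case=> B [[oB bB] [G [lcG FE]]].
have GB : forall m U, G m U -> B U by move=> m U GU; rewrite FE; exists m.
pose adm n (s : seq (set X)) := (size s <= n)%N /\
  (forall U, U \in s -> exists2 m, (m <= n)%N & G m U).
pose Fam n := [set vietoris_basic s | s in adm n].
exists (\bigcup_(n in setT) Fam n); split.
  split.
    move=> W [n _ [s [_ hs] <-]]; apply: vb_open => U /hs [m _ /GB /oB] //.
  move=> WW K oWW WWK.
  have [s [os [[Ks Km] sW]]] := oWW K WWK.
  have hg : forall x, exists U, proj1_sig K x ->
      B U /\ U x /\ exists2 V, V \in s & U `<=` V.
    move=> x; case: (pselect (proj1_sig K x)) => Kx; last by exists set0.
    have [V Vs Vx] := Ks x Kx.
    have [U [BU [Ux UV]]] := bB V x (os V Vs) Vx.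
    by exists U => _; split => //; split => //; exists V.
  have [g hg'] := choice hg.
  have gn : forall x, proj1_sig K x -> nbhs x (g x).
    move=> x Kx; apply: open_nbhs_nbhs; split; [exact: oB _ (hg' x Kx).1 | exact: (hg' x Kx).2.1].
  have [t [tK tcov]] := @fin_cover X (proj1_sig K) g (proj2_sig K).2 gn.
  have hh : forall V, exists U, V \in s ->
      B U /\ (exists x, proj1_sig K x /\ U x) /\ U `<=` V.
    move=> V; case: (boolP (V \in s)) => Vs; last by exists set0.
    have [x [Kx Vx]] := Km V Vs.
    have [U [BU [Ux UV]]] := bB V x (os V Vs) Vx.
    by exists U => _; split => //; split => //; exists x.
  have [h hh'] := choice hh.
  pose u := [seq g x | x <- t] ++ [seq h V | V <- s].
  have uP : forall U, U \in u -> B U /\ (exists2 V, V \in s & U `<=` V) /\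
      proj1_sig K `&` U !=set0.
    move=> U; rewrite mem_cat => /orP [/mapP [x xt ->]|/mapP [V Vs ->]].
      have [BU [Ux UV]] := hg' x (tK x xt).
      by split => //; split => //; exists x; split => //; exact: tK.
    have [BU [[x [Kx Ux]] UV]] := hh' V Vs.
    by split => //; split; [exists V | exists x].
  have hm : forall U, exists m, U \in u -> G m U.
    move=> U; case: (boolP (U \in u)) => Uu; last by exists 0.
    by have := (uP U Uu).1; rewrite FE => -[m _ GU]; exists m.
  have [mf hmf] := choice hm.
  have [M hM] := bound_seq u mf.
  exists (vietoris_basic u); split.
    exists (maxn (size u) M) => //; exists u => //; split; first exact: leq_maxl.
    move=> U Uu; exists (mf U); last exact: hmf.
    exact: leq_trans (hM U Uu) (leq_maxr _ _).
  split.
    split.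
      move=> y Ky; have [x xt gxy] := tcov y Ky; exists (g x) => //=.
      by rewrite mem_cat; apply/orP; left; exact: map_f.
    by move=> U Uu; exact: (uP U Uu).2.2.
  move=> L [Lu Lm]; apply: sW; split.
    move=> y /Lu [U /= Uu Uy]; have [_ [[V Vs UV] _]] := uP U Uu.
    by exists V => //; exact: UV.
  move=> V Vs; have [y [Ly hy]] : proj1_sig L `&` h V !=set0.
    by apply: Lm; rewrite mem_cat; apply/orP; right; exact: map_f.
  by exists y; split => //; exact: (hh' V Vs).2.2 _ hy.
exists Fam; split => //.
move=> n K.
have hO : forall p : nat * X, exists Uo, open Uo /\ Uo p.2 /\
    countable [set P | G p.1 P /\ P `&` Uo !=set0].
  by move=> [m x]; exact: lcG m x.
have [Of hOf] := choice hO.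
pose Ox x := foldr setI setT [seq Of (m, x) | m <- iota 0 n.+1].
have Oxp : forall x, open (Ox x) /\ (forall y, Ox x y <->
    forall U, U \in [seq Of (m, x) | m <- iota 0 n.+1] -> U y).
  by move=> x; apply: fold_open => U /mapP [m _ ->]; exact: (hOf (m, x)).1.
have OxO : forall x y m, (m <= n)%N -> Ox x y -> Of (m, x) y.
  move=> x y m mn /(Oxp x).2; apply; apply/mapP; exists m => //.
  by rewrite mem_iota add0n ltnS mn.
have Oxn : forall x, proj1_sig K x -> nbhs x (Ox x).
  move=> x Kx; apply: open_nbhs_nbhs; split; first exact: (Oxp x).1.
  by apply/(Oxp x).2 => U /mapP [m _ ->]; exact: (hOf (m, x)).2.1.
have [t [tK tcov]] := @fin_cover X (proj1_sig K) Ox (proj2_sig K).2 Oxn.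
pose Oall := \bigcup_(x in [set x | x \in t]) Ox x.
have oOall : open Oall by apply: bigcup_open => x _; exact: (Oxp x).1.
exists (vietoris_basic [:: Oall]); split.
  by apply: vb_open => U; rewrite inE => /eqP ->.
split.
  split.
    move=> y Ky; exists Oall; first by rewrite /= inE.
    by have [x xt Oy] := tcov y Ky; exists x.
  move=> U; rewrite inE => /eqP ->; have [y Ky] := (proj2_sig K).1.
  by exists y; split => //; have [x xt Oy] := tcov y Ky; exists x.
pose H := \bigcup_(x in [set x | x \in t]) \bigcup_(m in `I_n.+1)
  [set U | G m U /\ U `&` Of (m, x) !=set0].
have cH : countable H.
  apply: bigcup_countable; first exact: finite_set_countable (finite_seq t).
  move=> x _; apply: bigcup_countable; first exact: finite_set_countable (finite_II _).
  by move=> m _; exact: (hOf (m, x)).2.2.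
pose vb' (AA : set (set X)) : set (hyperspace X) :=
  [set L | proj1_sig L `<=` \bigcup_(U in AA) U /\
           forall U, AA U -> proj1_sig L `&` U !=set0].
apply: (sub_countable (card_le_trans _
  (card_image_le vb' [set AA | AA `<=` H /\ finite_set AA]))
  (countable_finite_subset cH)).
apply: subset_card_le => W [[s [_ hs] <-] [L [[Ls Lm] [LO _]]]].
exists [set U | U \in s] => //.
split; last exact: finite_seq s.
move=> U Us; have [y [Ly Uy]] := Lm U Us.
have [Z0 Z0in Z0y] := LO y Ly.
move: Z0in; rewrite /= inE => /eqP eZ0; rewrite eZ0 in Z0y.
have [x xt Oxy] := Z0y.
have [m mn GU] := hs U Us.
exists x => //; exists m; first by rewrite /= ltnS.
split => //; exists y; split => //; exact: OxO x y m mn Oxy.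
Qed.

Unset Implicit Arguments.

Theorem theorem3p12 (X : topologicalType) :
  hausdorff_space X -> regular_space X ->
  (has_sigma_lc_base (@open X) <-> has_sigma_lc_weak_base (@vietoris_open X)) /\
  (has_sigma_lc_weak_base (@vietoris_open X) <-> has_sigma_lc_base (@vietoris_open X)).
Proof.
move=> hX hR; split; split.
- by move=> h; apply: three_two; exact: one_three.
- exact: two_one.
- by move=> h; apply: one_three; exact: two_one.
- exact: three_two.
Qed.
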